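(* Let $n,r\ge1$ and let $\mathfrak{g}$ be of type $D_{n+1}$. Then \[ \det\left[\binom{2(n+i+j)+1}{n+i+j}\right]_{i,j=0}^{r-1}=\dim V(2r\omega_n)=\dim V(2r\omega_{n+1}). \]
   Context: For type $D_{n+1}$ ($\mathfrak{so}_{2n+2}$), $\omega_n$ and $\omega_{n+1}$ are the two spin fundamental weights, $\tfrac12(\epsilon_1+\cdots+\epsilon_n-\epsilon_{n+1})$ and $\tfrac12(\epsilon_1+\cdots+\epsilon_n+\epsilon_{n+1})$. *)

(* Defs.v *)
From HB Require Import structures.
From mathcomp Require Import all_boot all_order all_algebra.
Set Implicit Arguments. Unset Strict Implicit. Unset Printing Implicit Defensive.
Import Order.TTheory GRing.Theory Num.Theory.
Local Open Scope ring_scope.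

(* Root system of type D_m (so_{2m}), weights in epsilon-coordinates:
   a weight is lam : 'I_m -> rat, lam = sum_i lam i * eps_{i+1}.
   Positive roots: eps_i - eps_j, eps_i + eps_j (i < j).
   rho = (m-1, m-2, ..., 1, 0). *)
Definition rhoD (m : nat) (i : 'I_m) : rat := (m - 1 - i)%N%:R.

(* Dimension of the irreducible so_{2m}-module V(lam) with highest weight lam,
   given by the Weyl dimension formula
   prod_{alpha > 0} <lam + rho, alpha> / <rho, alpha>. *)
Definition dimV_D (m : nat) (lam : 'I_m -> rat) : rat :=
  \prod_(i < m) \prod_(j < m | (i < j)%N)
    (((lam i + rhoD i) - (lam j + rhoD j)) * ((lam i + rhoD i) + (lam j + rhoD j))
     / ((rhoD i - rhoD j) * (rhoD i + rhoD j))).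

Definition omegaD (m k : nat) (i : 'I_m) : rat :=
  if (k <= m - 2)%N then (i < k)%N%:R
  else if k == (m - 1)%N then (if (i < m - 1)%N then 1/2 else -(1/2))
  else 1/2.

(* Main.v *)
Require Import Defs.
From HB Require Import structures.
From mathcomp Require Import all_boot all_order all_algebra all_fingroup.
From mathcomp Require Import zify ring lra.
Import Order.TTheory GRing.Theory Num.Theory.
Local Open Scope ring_scope.

Ltac nz := repeat (apply/andP; split); apply/eqP; (intro; lra).

Lemma tel (X : rat) (k : nat) : 0 < X ->
  \prod_(0 <= b < k) ((X + b%:R + 2) / (X + b%:R))
  = (X + k%:R) * (X + k%:R + 1) / (X * (X + 1)).
Proof.
move=> x0; elim: k => [|k IH].
  by rewrite big_geq // addr0 divff // mulf_neq0 // lt0r_neq0 //; lra.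
rewrite big_nat_recr //= IH.
have := ler0n rat k => hk.
rewrite -natr1.
field; nz.
Qed.

Definition Fq (r a b : nat) : rat := (2 * r%:R + a%:R + b%:R) / (a%:R + b%:R).
Definition Pq r n := \prod_(0 <= a < n.+1) \prod_(0 <= b < a) Fq r a b.
Definition vq r n := \prod_(0 <= b < n.+1) Fq r n.+1 b.

Definition alpha (R N : rat) := (2*R+2*N+2)*(2*R+2*N+3)*(N+1)/((2*N+2)*(2*N+3)*(2*R+N+1)).
Definition beta (R N : rat) := (2*R+2*N+2)*(2*R+2*N+3)/((2*R+N+1)*(2*R+N+2)).
Definition Kq (R N : rat) := (2*R+2*N+2)*(2*R+2*N+3)*(2*R+1)*(2*R+2)/((2*R+N+1)*(2*R+N+2)^+2*(2*R+N+3)).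

Lemma P0 r : Pq r 0 = 1.
Proof. by rewrite /Pq big_nat1 big_geq. Qed.

Lemma PS r n : Pq r n.+1 = Pq r n * vq r n.
Proof. by rewrite /Pq big_nat_recr. Qed.

Lemma vq_pos r n : 0 < vq r n.
Proof.
rewrite /vq; apply: prodr_gt0 => b _; rewrite /Fq.
have := ler0n rat r; have := ler0n rat n.+1; have := ler0n rat b; have := ltr0Sn rat n.
move=> h1 h2 h3 h4; apply: divr_gt0; lra.
Qed.

Lemma Pq_pos r n : 0 < Pq r n.
Proof.
elim: n => [|n IH]; first by rewrite P0.
by rewrite PS mulr_gt0 // vq_pos.
Qed.

Lemma vV r n : vq r.+1 n = vq r n * beta r%:R n%:R.
Proof.
have X0 : 0 < 2 * r%:R + n%:R + 1 :> rat.
  have := ler0n rat r; have := ler0n rat n; lra.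
rewrite /vq.
transitivity (\prod_(0 <= b < n.+1) (Fq r n.+1 b *
   ((2 * r%:R + n%:R + 1 + b%:R + 2) / (2 * r%:R + n%:R + 1 + b%:R)))).
  apply: eq_bigr => b _; rewrite /Fq.
  have := ler0n rat r; have := ler0n rat n; have := ler0n rat b.
  rewrite -!natr1 => *. field; nz.
rewrite big_split /= tel //; congr (_ * _).
rewrite /beta -natr1; have := ler0n rat r; have := ler0n rat n => *; field; nz.
Qed.

Lemma natS k : k.+1%:R = k%:R + 1 :> rat.
Proof. by rewrite natr1. Qed.

Lemma vV' r n : vq r n.+1 = vq r n * alpha r%:R n%:R.
Proof.
pose g b : rat := (2 * r%:R + n%:R + 1 + b%:R) / (n%:R + 1 + b%:R).
have e1 : vq r n = \prod_(0 <= b < n.+1) g b.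
  by apply: eq_bigr => b _; rewrite /Fq /g (natS n) !addrA.
have e2 : vq r n.+1 = \prod_(0 <= b < n.+2) g b.+1.
  apply: eq_bigr => b _; rewrite /Fq /g (natS n.+1) (natS n) (natS b); congr (_ / _); ring.
have e3 : \prod_(0 <= b < n.+3) g b = g 0%N * \prod_(0 <= b < n.+2) g b.+1.
  by rewrite big_nat_recl.
have e4 : \prod_(0 <= b < n.+3) g b = vq r n * g n.+1 * g n.+2.
  by rewrite big_nat_recr // big_nat_recr //= e1.
have hg0 : g 0%N != 0.
  rewrite /g; have := ler0n rat r; have := ler0n rat n => *.
  apply: lt0r_neq0; apply: divr_gt0; lra.
have : vq r n.+1 = vq r n * g n.+1 * g n.+2 / g 0%N.
  by rewrite -e4 e3 -e2 [g 0%N * _]mulrC mulfK.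
move=> ->; rewrite /g /alpha (natS n.+1) (natS n).
have := ler0n rat r; have := ler0n rat n => *.
field; nz.
Qed.

Lemma PK r n : Pq r.+2 n * Pq r n = Kq r%:R n%:R * Pq r.+1 n ^+ 2.
Proof.
elim: n => [|n IH].
  rewrite !P0 /Kq; have := ler0n rat r => *; field; nz.
have hP := Pq_pos r n; have hv := vq_pos r n.
have E : Pq r.+2 n = Kq r%:R n%:R * Pq r.+1 n ^+ 2 / Pq r n.
  by rewrite -IH mulfK // lt0r_neq0.
rewrite !PS !vV E /Kq /beta (natS r) (natS n).
have := ler0n rat r; have := ler0n rat n => *.
field; nz.
Qed.

Lemma Prec r n :
  Pq r.+2 n * Pq r n.+2 = Pq r.+1 n * Pq r.+1 n.+2 - Pq r.+1 n.+1 ^+ 2.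
Proof.
have hP := Pq_pos r n; have hv := vq_pos r n.
have E : Pq r.+2 n = Kq r%:R n%:R * Pq r.+1 n ^+ 2 / Pq r n.
  by rewrite -PK mulfK // lt0r_neq0.
rewrite !PS !vV' !vV E /Kq /beta /alpha (natS r) ?(natS n).
have := ler0n rat r; have := ler0n rat n => *.
field; nz.
Qed.

Lemma det22 (R : comRingType) (M : 'M[R]_2) : \det M = M 0 0 * M 1 1 - M 0 1 * M 1 0.
Proof.
rewrite (expand_det_row _ 0) !big_ord_recl big_ord0 /cofactor !det_mx11 !mxE /=.
rewrite /= expr0 expr1 mul1r mulN1r addr0 mulrN.
by congr (M _ _ * M _ _ + - (M _ _ * M _ _)); apply/val_inj.
Qed.

Lemma sign_sq (R : comRingType) (b : bool) (x : R) : (-1) ^+ b * (x * (-1) ^+ b) = x.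
Proof. by case: b => /=; ring. Qed.

Lemma det_conj (R : comRingType) k (s : 'S_k) (M : 'M[R]_k) :
  \det (\matrix_(i, j) M (s i) (s j)) = \det M.
Proof.
have -> : \matrix_(i, j) M (s i) (s j) = row_perm s (col_perm s M).
  by apply/matrixP => i j; rewrite !mxE.
by rewrite row_permE col_permE !det_mulmx !det_perm odd_permV sign_sq.
Qed.

Lemma det_rowp (R : comRingType) k (s : 'S_k) (M : 'M[R]_k) :
  \det (\matrix_(i, j) M (s i) j) = (-1) ^+ s * \det M.
Proof.
have -> : \matrix_(i, j) M (s i) j = row_perm s M.
  by apply/matrixP => i j; rewrite !mxE.
by rewrite row_permE !det_mulmx !det_perm.
Qed.

Lemma det_colp (R : comRingType) k (s : 'S_k) (M : 'M[R]_k) :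
  \det (\matrix_(i, j) M i (s j)) = (-1) ^+ s * \det M.
Proof.
have -> : \matrix_(i, j) M i (s j) = col_perm s M.
  by apply/matrixP => i j; rewrite !mxE.
by rewrite col_permE !det_mulmx !det_perm odd_permV mulrC.
Qed.
Lemma DJ0 (R : idomainType) m (A : 'M[R]_(2 + m)) : \det A != 0 ->
  \det (ulsubmx (\adj A)) = \det A * \det (drsubmx A).
Proof.
move=> hd.
have hA := mul_mx_adj A.
rewrite -[A in A *m _]submxK -[\adj A]submxK mulmx_block (scalar_mx_block 2 m) in hA.
case/eq_block_mx: hA => h1 h2 h3 h4.
pose B := block_mx (ulsubmx (\adj A)) 0 (dlsubmx (\adj A)) (1%:M : 'M_m).
have hB : A *m B = block_mx (\det A)%:M (ursubmx A) 0 (drsubmx A).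
  by rewrite -[A in LHS]submxK mulmx_block !mulmx0 !mulmx1 !add0r h1 h3.
move/(congr1 determinant): hB; rewrite det_mulmx det_ublock det_lblock det1 mulr1 det_scalar.
move=> e; apply: (mulfI hd); rewrite e; ring.
Qed.

Lemma DJ (R : fieldType) m (A : 'M[R]_(2 + m)) :
  \det (ulsubmx (\adj A)) = \det A * \det (drsubmx A).
Proof.
pose A' := char_poly_mx (- A).
have hd : \det A' != 0 by apply: monic_neq0; apply: char_poly_monic.
have hA : map_mx (horner_eval 0) A' = A.
  apply/matrixP => i j; rewrite !mxE /horner_eval.
  case: (i == j); rewrite /= ?mulr1n ?mulr0n !hornerE; ring.
move: (@DJ0 _ _ A' hd) => /(congr1 (horner_eval 0)).
rewrite rmorphM -!det_map_mx map_ulsubmx map_drsubmx map_mx_adj hA.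
done.
Qed.

Definition cc (k : nat) : rat := ('C((2 * k).+1, k))%:R.
Definition Hk (k n : nat) : 'M[rat]_k := \matrix_(i < k, j < k) cc (n + i + j).
Definition hk k n := \det (Hk k n).

Definition sgm m : 'S_(m.+1) := perm (can_inj (@ord_predK m.+1)).

Lemma sigE m (i : 'I_m.+1) : val (sgm m i) = if val i == 0%N then m else (val i).-1.
Proof.
rewrite permE /=; case: i => [[|k] hk] /=.
  by rewrite /= modn_small.
rewrite modnDr modn_small //; lia.
Qed.

Definition tau m : 'S_(m.+2) := lift_perm ord0 ord0 (sgm m).

Lemma tauE m (i : 'I_m.+2) :
  val (tau m i) = if val i == 0%N then 0%N else if val i == 1%N then m.+1 else (val i).-1.
Proof.
case: (unliftP ord0 i) => [j ->|->]; last by rewrite /tau lift_perm_id.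
rewrite /tau lift_perm_lift /= sigE.
by case: j => [[|k] hk].
Qed.

Lemma hrec m n :
  hk m.+2 n * hk m n.+2 = hk m.+1 n.+2 * hk m.+1 n - hk m.+1 n.+1 ^+ 2.
Proof.
pose A : 'M[rat]_(2 + m) := \matrix_(i, j) Hk m.+2 n (tau m i) (tau m j).
have hA : \det A = hk m.+2 n by rewrite det_conj.
have hS : drsubmx A = Hk m n.+2.
  apply/matrixP => i j; rewrite !mxE; congr cc; rewrite !tauE /=.
  lia.
have := @DJ _ _ A; rewrite det22 hA hS !mxE /cofactor /=.
have M00 : \det (row' (lshift m 0) (col' (lshift m 0) A)) = hk m.+1 n.+2.
  rewrite /hk -[\det (Hk _ _)](@det_conj _ _ (sgm m)); congr (\det _); apply/matrixP => i j.
  rewrite !mxE; congr cc; rewrite !tauE /=.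
  move: (sigE m i) (sigE m j); rewrite /bump /=.
  case: i => [[|i] hi]; case: j => [[|j] hj] /=; lia.
have M11 : \det (row' (lshift m 1) (col' (lshift m 1) A)) = hk m.+1 n.
  rewrite /hk; congr (\det _); apply/matrixP => i j.
  rewrite !mxE; congr cc; rewrite !tauE /=.
  rewrite /bump /=.
  case: i => [[|i] hi]; case: j => [[|j] hj] /=; lia.
have M01 : \det (row' (lshift m 0) (col' (lshift m 1) A)) = (-1) ^+ sgm m * hk m.+1 n.+1.
  rewrite /hk -(@det_rowp _ _ (sgm m)); congr (\det _); apply/matrixP => i j.
  rewrite !mxE; congr cc; rewrite !tauE /=.
  move: (sigE m i); rewrite /bump /=.
  case: i => [[|i] hi]; case: j => [[|j] hj] /=; lia.
have M10 : \det (row' (lshift m 1) (col' (lshift m 0) A)) = (-1) ^+ sgm m * hk m.+1 n.+1.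
  rewrite /hk -(@det_colp _ _ (sgm m)); congr (\det _); apply/matrixP => i j.
  rewrite !mxE; congr cc; rewrite !tauE /=.
  move: (sigE m j); rewrite /bump /=.
  case: i => [[|i] hi]; case: j => [[|j] hj] /=; lia.
rewrite M00 M11 M01 M10 /= -/(hk m n.+2) => <-.
case: (odd_perm (sgm m)) => /=; ring.
Qed.

Lemma ccS n : cc n.+1 = cc n * beta 0 n%:R.
Proof.
have e1 := mul_bin_diag (2*n).+2 n.
have e2 := mul_bin_down (2*n).+3 n.+1.
rewrite /= in e1 e2.
have e3 : ((2 * n).+3 - n.+1 = n.+2)%N by lia.
rewrite e3 in e2.
have e4 : (2 * n.+1).+1 = (2 * n).+3 by lia.
rewrite /cc e4.
move/(congr1 (fun x => x%:R : rat)): e1; move/(congr1 (fun x => x%:R : rat)): e2.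
rewrite !natrM => e2 e1.
have hn := ler0n rat n.
have h1 : ('C((2 * n).+3, n.+1))%:R = ('C((2 * n).+2, n.+1))%:R * ((2 * n).+3)%:R / (n.+2)%:R :> rat.
  have hn2 : (n.+2)%:R != 0 :> rat by rewrite pnatr_eq0.
  by apply: (mulfI hn2); rewrite -e2 [RHS]mulrC divfK // mulrC.
have h2 : ('C((2 * n).+2, n.+1))%:R = ('C((2 * n).+1, n))%:R * ((2 * n).+2)%:R / (n.+1)%:R :> rat.
  have hn2 : (n.+1)%:R != 0 :> rat by rewrite pnatr_eq0.
  by apply: (mulfI hn2); rewrite -e1 [RHS]mulrC divfK // mulrC.
rewrite h1 h2 /beta !natS natrM; clear e1 e2 e3 e4 h1 h2.
field; nz.
Qed.

Lemma v0 n : vq 0 n = 1.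
Proof.
rewrite /vq; apply: big1 => b _; rewrite /Fq mulr0 add0r divff //.
by rewrite -natrD pnatr_eq0 addSn.
Qed.

Lemma Pq0 n : Pq 0 n = 1.
Proof. by elim: n => [|n IH]; rewrite ?P0 // PS IH v0 mul1r. Qed.

Lemma Pq1 n : Pq 1 n = cc n.
Proof.
elim: n => [|n IH]; first by rewrite P0 /cc.
by rewrite PS IH vV v0 mul1r ccS.
Qed.

Lemma hP r n : hk r n = Pq r n.
Proof.
suff : (forall n, hk r n = Pq r n) /\ (forall n, hk r.+1 n = Pq r.+1 n) by case.
elim: r => [|r [IH1 IH2]].
  split => n'; first by rewrite Pq0 /hk det_mx00.
  by rewrite Pq1 /hk det_mx11 !mxE !addn0.
split => // n'.
have h := hrec r n'.
rewrite IH1 !IH2 [Pq r.+1 n'.+2 * _]mulrC -Prec in h.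
by apply: (mulIf (lt0r_neq0 (Pq_pos r n'.+2))).
Qed.

Lemma dimV_const r n : dimV_D (fun _ : 'I_n.+1 => r%:R) = Pq r n.
Proof.
rewrite /dimV_D /Pq big_mkord (reindex_inj rev_ord_inj) /=; apply: eq_bigr => a _.
rewrite (reindex_inj rev_ord_inj) /=.
rewrite (big_nat_widen 0 a n.+1); last by apply: ltnW.
rewrite (big_mkord (fun i => true && (i < a)%N) (fun i => Fq r a i)).
apply: eq_big => [b|b hb]; first by rewrite /=; case: a b => a ha [b hb] /=; lia.
have ea : rhoD (rev_ord a) = a%:R by rewrite /rhoD /=; congr (_%:R); have := ltn_ord a; lia.
have eb : rhoD (rev_ord b) = b%:R by rewrite /rhoD /=; congr (_%:R); have := ltn_ord b; lia.
rewrite ea eb /Fq.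
have hab : (b < a)%N by move: hb; have := ltn_ord a; have := ltn_ord b; rewrite /=; lia.
have : b.+1%:R <= a%:R :> rat by rewrite ler_nat.
rewrite natS => h; have := ler0n rat b; have := ler0n rat r => *.
field; nz.
Qed.

Lemma dimV_eq m (l1 l2 : 'I_m -> rat) :
  (forall i, (l1 i + rhoD i) ^+ 2 = (l2 i + rhoD i) ^+ 2) -> dimV_D l1 = dimV_D l2.
Proof.
move=> h; rewrite /dimV_D; apply: eq_bigr => i _; apply: eq_bigr => j _.
have e : forall x y : rat, (x - y) * (x + y) = x ^+ 2 - y ^+ 2 by move=> x y; ring.
by rewrite !e !h.
Qed.

Lemma om_n r n (i : 'I_n.+1) : (1 <= n)%N ->
  ((2 * r)%:R * @omegaD n.+1 n i + rhoD i) ^+ 2 = (r%:R + rhoD i) ^+ 2.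
Proof.
move=> hn; rewrite /omegaD.
have -> : (n <= n.+1 - 2)%N = false by apply/negbTE; lia.
have -> : (n == n.+1 - 1)%N = true by apply/eqP; lia.
case: ifP => hi; rewrite natrM.
  by field.
have -> : rhoD i = 0 by rewrite /rhoD; have := ltn_ord i; move: hi; rewrite /= => hi hi'; 
  have -> : (n.+1 - 1 - i = 0)%N by lia.
by field.
Qed.

Lemma om_n1 r n (i : 'I_n.+1) : (1 <= n)%N ->
  ((2 * r)%:R * @omegaD n.+1 n.+1 i + rhoD i) ^+ 2 = (r%:R + rhoD i) ^+ 2.
Proof.
move=> hn; rewrite /omegaD.
have -> : (n.+1 <= n.+1 - 2)%N = false by apply/negbTE; lia.
have -> : (n.+1 == n.+1 - 1)%N = false by apply/negbTE; lia.
by rewrite natrM; field.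
Qed.

Theorem corollary5p32 (n r : nat) (hn : (1 <= n)%N) (hr : (1 <= r)%N) :
  \det (\matrix_(i < r, j < r)
          ('C((2 * (n + i + j)).+1, n + i + j))%:R : 'M[rat]_r)
    = dimV_D (fun i : 'I_n.+1 => (2 * r)%:R * @omegaD n.+1 n i)
  /\ dimV_D (fun i : 'I_n.+1 => (2 * r)%:R * @omegaD n.+1 n i)
    = dimV_D (fun i : 'I_n.+1 => (2 * r)%:R * @omegaD n.+1 n.+1 i).
Proof.
have e1 := @dimV_eq n.+1 _ (fun _ => r%:R) (fun i => @om_n r n i hn).
have e2 := @dimV_eq n.+1 _ (fun _ => r%:R) (fun i => @om_n1 r n i hn).
rewrite e1 e2 dimV_const; split => //.
rewrite -hP /hk; congr (\det _); apply/matrixP => i j; rewrite !mxE.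
Qed.
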